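(* Let $\mathcal{G}=(V,L)$ be a finite connected undirected graph with monitor set $M$ and non-monitor set $N=V\setminus M$, with measurement paths given by Controllable Simple-path Probing (CSP). Let $S\subseteq N$ and $k\ge1$. (a) If for every node set $V'\subseteq V$ with $|V'|\le k+1$ containing at most one monitor, each connected component of $\mathcal{G}-V'$ that contains a node of $S$ also contains a monitor, then $S$ is $k$-identifiable. (b) If $S$ is $k$-identifiable, then for every node set $V'\subseteq V$ with $|V'|\le k$ containing at most one monitor, each connected component of $\mathcal{G}-V'$ that contains a node of $S$ also contains a monitor.
   Context: $\mathcal{G}-V'$ denotes deletion of the nodes of $V'$ and incident links. Under CSP, the measurement paths $P$ are all simple paths (no repeated nodes) in $\mathcal{G}$ between two distinct monitors. A failure set is any $F\subseteq N$; a path fails iff it traverses a node of $F$. $P_F$ is the set of paths in $P$ traversing a node of $F$; $F_1,F_2$ distinguishable iff $P_{F_1}\ne P_{F_2}$. $S\subseteq N$ is $k$-identifiable if any two failure sets $F_1,F_2$ with $|F_1|,|F_2|\le k$ and $F_1\cap S\ne F_2\cap S$ are distinguishable. *)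

(* Defs.v *)
From mathcomp Require Import all_boot.
Set Implicit Arguments. Unset Strict Implicit. Unset Printing Implicit Defensive.

Definition simple_graph (V : finType) (e : rel V) : Prop :=
  symmetric e /\ irreflexive e.

Definition connected_graph (V : finType) (e : rel V) : Prop :=
  forall x y : V, connect e x y.

(* CSP measurement path: a simple path (no repeated nodes), given by its
   node sequence, between two distinct monitors. *)
Definition csp_path (V : finType) (e : rel V) (M : {set V}) (p : seq V) : Prop :=
  exists (x : V) (q : seq V),
    [/\ p = x :: q, path e x q & uniq p] /\
    [/\ x \in M, last x q \in M & x != last x q].

Definition fails (V : finType) (F : {set V}) (p : seq V) : bool :=
  has (fun v => v \in F) p.

(* F1, F2 distinguishable iff P_F1 <> P_F2, where P_F = set of CSP paths
   traversing a node of F. *)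
Definition distinguishable (V : finType) (e : rel V) (M F1 F2 : {set V}) : Prop :=
  exists p : seq V, csp_path e M p /\ fails F1 p != fails F2 p.

Definition k_identifiable (V : finType) (e : rel V) (M S : {set V}) (k : nat) : Prop :=
  forall F1 F2 : {set V},
    F1 \subset ~: M -> F2 \subset ~: M ->
    #|F1| <= k -> #|F2| <= k ->
    F1 :&: S != F2 :&: S ->
    distinguishable e M F1 F2.

Definition del_rel (V : finType) (e : rel V) (V' : {set V}) : rel V :=
  fun x y => [&& e x y, x \notin V' & y \notin V'].

Definition comps_reach_monitor (V : finType) (e : rel V) (M S V' : {set V}) : Prop :=
  forall s, s \in S -> s \notin V' ->
    exists2 m, m \in M :\: V' & connect (del_rel e V') s m.

Definition cond (V : finType) (e : rel V) (M S : {set V}) (j : nat) : Prop :=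
  forall V' : {set V}, #|V'| <= j -> #|V' :&: M| <= 1 ->
    comps_reach_monitor e M S V'.

(* Main.v *)
Require Import Defs.
From mathcomp Require Import all_boot.
Set Implicit Arguments. Unset Strict Implicit. Unset Printing Implicit Defensive.

Section Gen.
Variable T : eqType.

Lemma last_occ (a : pred T) l : has a l ->
  exists l1 u l2, [/\ l = l1 ++ u :: l2, a u & ~~ has a l2].
Proof.
elim: l => //= x l IH.
case: (boolP (has a l)) => [/IH [l1 [u [l2 [-> au nh]]]] _ | nh].
  by exists (x :: l1), u, l2.
rewrite orbF => ax; by exists [::], x, l.
Qed.

Lemma first_occ (a : pred T) l : has a l ->
  exists l1 u l2, [/\ l = l1 ++ u :: l2, a u & ~~ has a l1].
Proof.
elim: l => //= x l IH.
case: (boolP (a x)) => [ax _ | nax /= hl].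
  by exists [::], x, l.
have [l1 [u [l2 [-> au nh]]]] := IH hl.
by exists (x :: l1), u, l2; split => //=; rewrite negb_or nax.
Qed.

Lemma mem_split (x : T) l : x \in l -> exists l1 l2, l = l1 ++ x :: l2.
Proof. by case/splitPr => l1 l2; exists l1, l2. Qed.

Definition lpath (e : rel T) (l : seq T) :=
  if l is x :: r then path e x r else true.

Lemma lpath_split e L y X :
  lpath e (L ++ y :: X) = lpath e (rcons L y) && path e y X.
Proof.
case: L => [|a L] //=.
by rewrite -cat_rcons cat_path last_rcons.
Qed.

Lemma rev_path_sym (e : rel T) x l y : symmetric e ->
  path e x (rcons l y) -> path e y (rev (x :: l)).
Proof.
move=> es hp.
have := rev_path e x (rcons l y).
rewrite last_rcons belast_rcons => ->.
by rewrite (@eq_path _ _ e) // => u v; rewrite es.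
Qed.

Lemma pref_path (e : rel T) s q u : path e s q -> u \in s :: q ->
  exists q1, [/\ path e s q1, last s q1 = u & size q1 <= size q].
Proof.
move=> hp; rewrite in_cons => /orP [/eqP -> | Hu]; first by exists [::].
case/splitPr: Hu hp => p1 p2 hp.
exists (rcons p1 u); rewrite last_rcons size_rcons size_cat /= addnS ltnS leq_addr.
split=> //; move: hp; by rewrite -cat_rcons cat_path => /andP [].
Qed.
End Gen.

Lemma del_path_notin (V : finType) (h : rel V) (W : {set V}) x l :
  path (del_rel h W) x l -> {in l, forall z, z \notin W}.
Proof.
elim: l x => //= y l IH x /andP [/and3P [_ _ yW] hp] z.
rewrite in_cons => /orP [/eqP -> // | zl]; exact: IH hp z zl.
Qed.

Lemma del_path_sub (V : finType) (h : rel V) (W : {set V}) x l :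
  path (del_rel h W) x l -> path h x l.
Proof. by apply: sub_path => u v /and3P []. Qed.

Lemma to_del_path (V : finType) (h : rel V) (W : {set V}) x l :
  path h x l -> x \notin W -> {in l, forall z, z \notin W} ->
  path (del_rel h W) x l.
Proof.
elim: l x => //= y l IH x /andP [hxy hp] xW hl.
have yW : y \notin W by apply: hl; rewrite mem_head.
rewrite /del_rel hxy xW yW /=; apply: IH => // z zl; apply: hl.
by rewrite in_cons zl orbT.
Qed.

Section Fan.
Variables (V : finType) (h : rel V) (T : {set V}).
Hypothesis hsym : symmetric h.

Definition ear (R : seq V) :=
  if R is a :: r then [&& path h a r, uniq (a :: r), a \in T, last a r \in T & a != last a r]
  else false.

Lemma ear_split L y X :
  ear (L ++ y :: X) = [&& lpath h (rcons L y), path h y X, uniq (L ++ y :: X) &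
     [&& head y L \in T, last y X \in T & head y L != last y X]].
Proof.
case: L => [|a L] //=.
by rewrite -cat_rcons cat_path last_rcons !last_cat /= last_rcons !andbA.
Qed.

Lemma head_in (L X : seq V) (y : V) : head y L \in L ++ y :: X.
Proof. by case: L => [|a L]; rewrite /= mem_head. Qed.

Lemma ear_rev R : ear R -> ear (rev R).
Proof.
case: R => [|a r] //= /and5P [hp hu aT lT alr].
case/lastP: r hp hu lT alr => [|r0 b] hp hu lT alr; first by rewrite eqxx in alr.
rewrite last_rcons in lT alr.
rewrite rev_cons rev_rcons /=.
have hp' := rev_path_sym hsym hp.
rewrite rev_cons in hp'.
rewrite hp' last_rcons aT lT eq_sym alr /= andbT.
change (uniq (b :: rcons (rev r0) a)); rewrite -rev_uniq rev_cons rev_rcons revK; exact: hu.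
Qed.

Lemma join_right L y Rt C z :
  ear (L ++ y :: Rt) -> z \in Rt -> path h y C -> last y C = z ->
  uniq (y :: C) -> {in C, forall c, c \in L ++ y :: Rt -> c = z} ->
  exists2 R', ear R' & {subset C <= R'}.
Proof.
move=> + zR; case/splitPr: zR => B1 B2.
move=> hR hC lC uC cR.
exists (L ++ y :: (C ++ B2)); last by move=> c cC; rewrite mem_cat in_cons mem_cat cC !orbT.
move: hR; rewrite !ear_split => /and4P [fp pB uR /and3P [hT lT hl]].
have pB2 : path h z B2 by move: pB; rewrite -cat_rcons cat_path last_rcons => /andP [].
rewrite fp cat_path hC lC pB2 hT /=.
rewrite !last_cat lC /= in lT hl *.
rewrite lT hl andbT.
have := uR; rewrite -(cat_rcons y L) cat_uniq => /and3P [uA nAB uB].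
have := uB; rewrite -(cat_rcons z B1) cat_uniq => /and3P [_ nzB uB2].
have zB2 : z \notin B2.
  apply/negP => zB; move/hasPn: nzB => /(_ z zB).
  by rewrite mem_rcons mem_head.
have zA : z \notin rcons L y.
  apply/negP => zA; move/hasPn: nAB => /(_ z); rewrite mem_cat mem_head orbT => /(_ isT).
  by rewrite zA.
rewrite -(cat_rcons y L) cat_uniq uA /=.
move: uC => /= /andP [_ uC].
have hAB2 : ~~ has (mem (rcons L y)) B2.
  apply/hasPn => c cB; move/hasPn: nAB => /(_ c); rewrite mem_cat in_cons cB !orbT.
  by move/(_ isT).
rewrite has_cat negb_or hAB2 andbT cat_uniq uC uB2 andbT /=.
apply/andP; split.
  apply/hasPn => c cC; apply/negP => cA.
  have cz := cR c cC; rewrite -(cat_rcons y L) mem_cat cA /= in cz; rewrite (cz isT) in cA.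
  by rewrite cA in zA.
rewrite andbT.
apply/hasPn => c cB; apply/negP => cC.
have cz := cR c cC; rewrite !(mem_cat, in_cons) cB !orbT in cz.
by rewrite -(cz isT) cB in zB2.
Qed.


Lemma join R y C z : ear R -> y \in R -> path h y C -> last y C = z -> uniq (y :: C) ->
  {in C, forall c, c \in R -> c = z} -> (z \notin R -> z \in T) -> z != y ->
  exists2 R', ear R' & {subset C <= R'}.
Proof.
move=> eR yR; case/splitPr: yR eR => L Rt eR hC lC uC cR zT zy.
case: (boolP (z \in Rt)) => zRt; first exact: join_right eR zRt hC lC uC cR.
case: (boolP (z \in L)) => zL.
  have eR' := ear_rev eR; rewrite rev_cat rev_cons cat_rcons in eR'.
  apply: (join_right eR' _ hC lC uC); first by rewrite mem_rev.
  move=> c cC cm; apply: cR => //; move: cm; rewrite !(mem_cat, in_cons, mem_rev).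
  by case: (c \in L); case: (c == y); case: (c \in Rt); rewrite ?orbT.
have zR : z \notin L ++ y :: Rt by rewrite mem_cat in_cons negb_or zL /= negb_or zy.
exists (L ++ y :: C); last by move=> c cC; rewrite mem_cat in_cons cC !orbT.
move: eR; rewrite !ear_split => /and4P [fp pB uR /and3P [hT lT hl]].
rewrite fp hC hT lC (zT zR) /=.
have -> : head y L != z.
  by apply/negP => /eqP hz; move: zR; rewrite -hz head_in.
rewrite andbT -(cat_rcons y L) cat_uniq.
move: uR; rewrite -(cat_rcons y L) cat_uniq => /and3P [-> _ _] /=.
move: uC => /= /andP [_ ->]; rewrite andbT.
apply/hasPn => c cC; apply/negP => cA.
have cz : c = z by apply: cR => //; rewrite -cat_rcons mem_cat cA.
by move: zR; rewrite -cz -cat_rcons mem_cat cA.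
Qed.

Variable s : V.
Hypothesis sT : s \notin T.
Hypothesis hcut : forall v, v != s ->
  exists2 t, t \in T :\ v & connect (del_rel h [set v]) s t.

Lemma fan_main n : forall R q, ear R -> path h s q -> last s q \in R -> size q <= n ->
  exists2 R', ear R' & s \in R'.
Proof.
elim: n => [|n IH] R q eR hq lq sq.
  by case: q sq lq hq => // _ lq _; exists R.
case/lastP: q hq lq sq => [|q' y] hq lq sq; first by exists R.
rewrite last_rcons in lq; rewrite size_rcons ltnS in sq.
have hq0 := hq.
move: hq; rewrite rcons_path => /andP [hq' hpy].
have IHu : forall R' u, ear R' -> u \in s :: q' -> u \in R' ->
    exists2 R'', ear R'' & s \in R''.
  move=> R' u eR' uq uR'.
  have [q1 [hq1 lq1 sq1]] := pref_path hq' uq.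
  apply: (IH R' q1) => //; [by rewrite lq1 | exact: leq_trans sq1 sq].
case: (boolP (has (mem R) (s :: q'))) => [/hasP [x xq xR] | nR].
  exact: IHu R x eR xq xR.
have sR : s \notin R by apply: contra nR => sR; rewrite /= sR.
have ys : y != s by apply: contraNneq sR => <-.
have [t /setD1P [ty tT] ct] := hcut ys.
case/connectP: ct => w hw tw.
move: tw; case: (shortenP hw) => w' hw' uw' _ tw.
set P' := s :: q'.
have hs : has (mem P') (s :: w') by rewrite /= mem_head.
have [W1 [u [W2 [eW uP nW2]]]] := last_occ hs.
have pu : path (del_rel h [set y]) u W2.
  have := hw'; rewrite -[path _ s w']/(lpath (del_rel h [set y]) (s :: w')) eW lpath_split.
  by case/andP.
have lu : last u W2 = t.
  have : last s (s :: w') = t by rewrite /= tw.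
  by rewrite eW last_cat.
have uu : uniq (u :: W2) by move: uw'; rewrite eW cat_uniq => /and3P [].
have uR : u \notin R by apply: (hasPn nR).
have uy : u != y by apply: contraNneq uR => ->.
have hrev : path h y (rev (s :: q')) := rev_path_sym hsym hq0.
have uq : u \in rev (s :: q') by rewrite mem_rev.
have [L1 [L2 eL]] := mem_split uq.
have hZ : path h y (rcons L1 u) by move: hrev; rewrite eL -cat_rcons cat_path => /andP [].
have subL : {subset rcons L1 u <= P'}.
  by move=> c cL; rewrite -mem_rev eL -cat_rcons mem_cat cL.
have : last y (rcons L1 u) = u by rewrite last_rcons.
case: (shortenP hZ) => Z hZ' uZ subZ lZ.
have ZP : {subset Z <= P'} by move=> c /subZ /subL.
have uZmem : u \in Z.
  have := mem_last y Z; rewrite lZ in_cons => /orP [/eqP uy' | //].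
  by rewrite uy' eqxx in uy.
suff [R' eR' uR'] : exists2 R', ear R' & u \in R' by exact: IHu R' u eR' uP uR'.
case: (boolP (u \in T)) => uT.
  have cRZ : {in Z, forall c, c \in R -> c = u}.
    by move=> c cZ cR; case/negP: (hasPn nR c (ZP c cZ)); exact: cR.
  have [R' eR' sub] := join eR lq hZ' lZ uZ cRZ (fun _ => uT) uy.
  by exists R' => //; exact: sub _ uZmem.
have hW2 : has (fun c => (c \in R) || (c \in T)) W2.
  have : t \in u :: W2 by rewrite -lu mem_last.
  rewrite in_cons => /orP [/eqP tu | tW2]; first by move: uT; rewrite -tu tT.
  by apply/hasP; exists t => //; rewrite tT orbT.
have [X1 [x [X2 [eX xRT nX1]]]] := first_occ hW2.
set C := Z ++ rcons X1 x.
have pX : path (del_rel h [set y]) u (rcons X1 x).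
  by move: pu; rewrite eX -cat_rcons cat_path => /andP [].
have hC : path h y C by rewrite cat_path hZ' lZ (del_path_sub pX).
have lC : last y C = x by rewrite last_cat last_rcons.
have nyW2 := del_path_notin pu.
have xW2 : x \in W2 by rewrite eX mem_cat mem_head orbT.
have X1W2 : {subset rcons X1 x <= W2}.
  by move=> c; rewrite eX -cat_rcons mem_cat => ->.
have uC : uniq (y :: C).
  rewrite /C /= mem_cat negb_or cat_uniq.
  move: uZ => /= /andP [-> ->] /=.
  have -> : y \notin rcons X1 x.
    by apply/negP => /X1W2 /nyW2; rewrite in_set1 eqxx.
  have -> : uniq (rcons X1 x).
    by move: uu => /= /andP [_]; rewrite eX -cat_rcons cat_uniq => /and3P [].
  rewrite andbT /=; apply/hasPn => c /X1W2 cW.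
  apply/negP => /ZP cP; case/negP: (hasPn nW2 c cW); exact: cP.
have cR : {in C, forall c, c \in R -> c = x}.
  move=> c; rewrite mem_cat => /orP [/ZP cP | ].
    by move=> cR; case/negP: (hasPn nR c cP); exact: cR.
  rewrite mem_rcons in_cons => /orP [/eqP -> // | cX] cR.
  by case/negP: (hasPn nX1 c cX); rewrite cR.
have xT : x \notin R -> x \in T by move: xRT => /orP [-> | ->].
have xy : x != y by have := nyW2 x xW2; rewrite in_set1.
have [R' eR' sub] := join eR lq hC lC uC cR xT xy.
by exists R' => //; apply: sub; rewrite mem_cat uZmem.
Qed.

Lemma fan : (exists2 t, t \in T & connect h s t) -> exists2 R, ear R & s \in R.
Proof.
move=> [t1 t1T c1].
have t1s : t1 != s by apply: contraNneq sT => <-.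
have [t2 /setD1P [t21 t2T] c2] := hcut t1s.
have c2' : connect h s t2.
  by apply: connect_sub _ _ _ c2 => u v /and3P [huv _ _]; exact: connect1.
have c12 : connect h t1 t2.
  by apply: connect_trans c2'; rewrite (sym_connect_sym hsym).
case/connectP: c12 => p hp tp.
move: tp; case: (shortenP hp) => p' hp' up' _ tp.
case/connectP: c1 => q hq lq.
apply: (@fan_main (size q) (t1 :: p') q) => //.
  by apply/and5P; split => //; rewrite -tp // eq_sym.
by rewrite -lq mem_head.
Qed.
End Fan.

Lemma partA (V : finType) (e : rel V) (M S : {set V}) (k : nat) (F1 F2 : {set V}) (s : V) :
  symmetric e -> S \subset ~: M -> cond e M S k.+1 -> F2 \subset ~: M ->
  #|F2| <= k -> s \in S -> s \in F1 -> s \notin F2 -> distinguishable e M F1 F2.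
Proof.
move=> es SM hc F2M cF2 sS s1 s2.
have sM : s \notin M by have := subsetP SM s sS; rewrite inE.
have F2nM : forall x, x \in F2 -> x \notin M.
  by move=> x xF; have := subsetP F2M x xF; rewrite inE.
set h := del_rel e F2.
have hsym : symmetric h.
  move=> x y; rewrite /h /del_rel es.
  by case: (e y x); case: (x \in F2); case: (y \in F2).
have hcut : forall v, v != s ->
    exists2 t, t \in M :\ v & connect (del_rel h [set v]) s t.
  move=> v vs.
  have c1 : #|v |: F2| <= k.+1.
    by rewrite cardsU1; apply: leq_trans (leq_add (leq_b1 _) cF2) _.
  have c2 : #|(v |: F2) :&: M| <= 1.
    apply: leq_trans (subset_leq_card (_ : _ \subset [set v])) _; last by rewrite cards1.
    apply/subsetP => x; rewrite !inE => /andP [/orP [-> // | xF] xM].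
    by rewrite (negbTE (F2nM x xF)) in xM.
  have sV : s \notin v |: F2 by rewrite !inE negb_or eq_sym vs s2.
  have [m mIn cm] := hc _ c1 c2 s sS sV.
  exists m; first by move: mIn; rewrite !inE negb_or => /andP [/andP [-> _] ->].
  move: cm; rewrite (@eq_connect _ _ (del_rel e (v |: F2))) // => x y.
  rewrite /h /del_rel !inE !negb_or.
  by case: (e x y); case: (x == v); case: (y == v); case: (x \in F2); case: (y \in F2).
have h0 : exists2 t, t \in M & connect h s t.
  have c1 : #|F2| <= k.+1 by apply: leq_trans cF2 _.
  have c2 : #|F2 :&: M| <= 1.
    apply: leq_trans (subset_leq_card (_ : _ \subset [set s])) _; last by rewrite cards1.
    apply/subsetP => x; rewrite !inE => /andP [xF xM].
    by rewrite (negbTE (F2nM x xF)) in xM.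
  have [m mIn cm] := hc _ c1 c2 s sS s2.
  by exists m => //; move: mIn; rewrite inE => /andP [].
have [R eR sR] := fan hsym sM hcut h0.
case: R eR sR => [|a r] //= /and5P [hp hu aM lM alr] sR.
exists (a :: r); split.
  exists a, r; split; split => //; exact: del_path_sub hp.
have -> : fails F1 (a :: r) by apply/hasP; exists s.
have -> // : fails F2 (a :: r) = false.
apply/negbTE/hasPn => x; rewrite in_cons => /orP [/eqP -> | xr].
  by apply/negP => aF; move: (F2nM a aF); rewrite aM.
exact: del_path_notin hp x xr.
Qed.

Lemma partB (V : finType) (e : rel V) (M S : {set V}) (k : nat) :
  symmetric e -> S \subset ~: M -> 1 <= k ->
  k_identifiable e M S k -> cond e M S k.
Proof.
move=> es SM k1 kid V' cV' cM s sS sV'.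
case: (boolP [exists m, (m \in M :\: V') && connect (del_rel e V') s m]) =>
  [/existsP [m /andP [mM cm]] | /existsPn Hn]; first by exists m.
exfalso.
have sM : s \notin M by have := subsetP SM s sS; rewrite inE.
pose w := if [pick x in V' :&: M] is Some m then m else odflt s [pick x in V'].
have wM : forall x, x \in V' -> x \in M -> x = w.
  move=> x xV xM; rewrite /w; case: pickP => [m /setIP [mV mM] | none].
    by move/card_le1_eqP: cM => H; apply: H; rewrite inE ?xV ?xM ?mV ?mM.
  by move: (none x); rewrite inE xV xM.
have wV : w \in V' \/ V' = set0.
  rewrite /w; case: pickP => [m /setIP [mV _] | _]; first by left.
  case: pickP => [m mV | none]; first by left.
  by right; apply/setP => x; rewrite inE (none x).
set F2 := V' :\ w.
set F1 := s |: F2.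
have F2M : F2 \subset ~: M.
  apply/subsetP => x; rewrite !inE => /andP [xw xV]; apply/negP => xM.
  by rewrite (wM x xV xM) eqxx in xw.
have F1M : F1 \subset ~: M.
  apply/subsetP => x; rewrite in_setU1 => /orP [/eqP -> | xF]; first by rewrite inE.
  exact: subsetP F2M x xF.
have cF2 : #|F2| <= k by apply: leq_trans (subset_leq_card (subD1set V' w)) cV'.
have cF2' : #|F2| < k.
  case: wV => [wV | V0].
    by move: cV'; rewrite (cardsD1 w V') wV.
  by apply: leq_ltn_trans k1; rewrite -(cards0 V) -V0 subset_leq_card // subD1set.
have cF1 : #|F1| <= k.
  by rewrite cardsU1; apply: leq_trans (leq_add (leq_b1 _) (leqnn _)) _; rewrite add1n.
have neq : F1 :&: S != F2 :&: S.
  apply/negP => /eqP /setP /(_ s); rewrite !inE eqxx sS (negbTE sV') /=.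
  by rewrite andbF.
have [p [cp dp]] := kid F1 F2 F1M F2M cF1 cF2 neq.
apply: (negP dp); apply/eqP.
have esc : forall l, path e s l -> last s l \in M -> has (mem V') l.
  move=> l hl lM; apply/negPn/negP => nh.
  have nl : {in l, forall z, z \notin V'} by move=> z zl; exact: (hasPn nh z zl).
  have hd : path (del_rel e V') s l := to_del_path hl sV' nl.
  have := Hn (last s l); rewrite inE lM andbT (path_connect hd (mem_last s l)) andbT.
  have := mem_last s l; rewrite in_cons => /orP [/eqP -> | ll]; first by rewrite sV'.
  by rewrite (nl _ ll).
case: (boolP (s \in p)) => sp; last first.
  apply: eq_in_has => x xp; rewrite /F1 in_setU1.
  by have -> : (x == s) = false by apply/negP => /eqP xs; rewrite -xs xp in sp.
have -> : fails F1 p by apply/hasP; exists s => //; rewrite /F1 in_setU1 eqxx.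
apply/esym.
case: cp => [x [q [[ep hp up] [xM lM xl]]]]; subst p.
have [p1 [p2 ep]] := mem_split sp.
have lp := hp; rewrite -[path e x q]/(lpath e (x :: q)) ep lpath_split in lp.
case/andP: lp => lp1 lp2.
have l2 : last s p2 = last x q.
  by move: (congr1 (last x) ep); rewrite last_cat /= => ->.
have h2 : has (mem V') p2 by apply: esc lp2 _; rewrite l2.
case: p1 ep lp1 => [|a p1'] ep lp1.
  by case: ep => xs; rewrite xs (negbTE sM) in xM.
case: ep => ax ep; subst a.
have hr := rev_path_sym es lp1.
have h1 : has (mem V') (x :: p1').
  rewrite -has_rev; apply: esc hr _.
  by rewrite rev_cons last_rcons.
have := up; rewrite ep -cat_cons cat_uniq => /and3P [_ dis _].
case/hasP: h1 => v1 v1p v1V.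
case/hasP: h2 => v2 v2p v2V.
have v12 : v1 != v2.
  apply/negP => /eqP e12; subst v2.
  by move/hasPn: dis => /(_ v1); rewrite in_cons v2p orbT v1p => /(_ isT).
apply/hasP; case: (eqVneq v1 w) => [e1 | n1].
  exists v2; first by rewrite mem_cat !in_cons v2p !orbT.
  by rewrite !inE (v2V : v2 \in V') andbT; apply: contra v12 => /eqP ->; rewrite e1.
exists v1; first by rewrite mem_cat v1p.
by rewrite !inE (v1V : v1 \in V') n1.
Qed.

Theorem lemma5 (V : finType) (e : rel V) (M S : {set V}) (k : nat) :
  simple_graph e -> connected_graph e ->
  S \subset ~: M -> 1 <= k ->
  (cond e M S k.+1 -> k_identifiable e M S k) /\
  (k_identifiable e M S k -> cond e M S k).
Proof.
move=> [es _] _ SM k1; split; last exact: partB.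
move=> hc F1 F2 F1M F2M c1 c2 neq.
case: (boolP [exists s, (s \in S) && ((s \in F1) != (s \in F2))]) =>
  [/existsP [s /andP [sS d]] | /existsPn H]; last first.
  case/negP: neq; apply/eqP/setP => x; rewrite !inE; move: (H x).
  by case: (x \in S); case: (x \in F1); case: (x \in F2).
case: (boolP (s \in F1)) => s1.
  by apply: (partA es SM hc F2M c2 sS s1); rewrite s1 in d; apply: negbT; move: d; case: (s \in F2).
have s2 : s \in F2 by move: d; rewrite (negbTE s1); case: (s \in F2).
have [p [cp dp]] := partA es SM hc F1M c1 sS s2 s1.
by exists p; split => //; rewrite eq_sym.
Qed.
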